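(* Let $q$ be a power of $2$, let $b\in\mathbb{F}_q$ with $b\ne0$, and let $n\ge2$ be an integer. Let $r\ge0$ be such that $2^r$ divides $n+1$ but $2^{r+1}$ does not, and let $m\ge0$ be defined by $n+1=2^r(m+1)$. Assume $r\ge1$ and $\gcd(m+1,q^2-1)=1$. Then $\hat C_n(a,b)$ is LCD for every $a\in\mathbb{F}_q\setminus\{1\}$.
   Context: For $a,b\in\mathbb{F}_q$ and $n\ge 2$, $\hat T_n(a,b)$ denotes the $n\times n$ symmetric tridiagonal Toeplitz matrix over $\mathbb{F}_q$ with all diagonal entries equal to $a$, all entries on the first super- and sub-diagonals equal to $b$, and all other entries $0$. $\hat C_n(a,b)$ is the $[2n,n]$ linear code over $\mathbb{F}_q$ with generator matrix $[I_n\mid \hat T_n(a,b)]$. A linear code $C$ is LCD if $C\cap C^\perp=\{0\}$ (Euclidean dual). *)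

(* Defs.v *)
From HB Require Import structures.
From mathcomp Require Import all_boot all_order all_algebra all_field.
Set Implicit Arguments. Unset Strict Implicit. Unset Printing Implicit Defensive.
Import GRing.Theory.
Local Open Scope ring_scope.

Definition tridiagT (F : fieldType) (n : nat) (a b : F) : 'M[F]_n :=
  \matrix_(i < n, j < n)
     if i == j then a
     else if (i.+1 == j :> nat) || (j.+1 == i :> nat) then b else 0.

Definition genC (F : fieldType) (n : nat) (a b : F) : 'M[F]_(n, n + n) :=
  row_mx 1%:M (tridiagT n a b).

Definition in_code (F : fieldType) (k N : nat) (G : 'M[F]_(k, N)) (x : 'rV[F]_N) :=
  (x <= G)%MS.

Definition in_dual (F : fieldType) (k N : nat) (G : 'M[F]_(k, N)) (x : 'rV[F]_N) :=
  forall c : 'rV[F]_N, in_code G c -> c *m x^T = 0.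

Definition is_LCD (F : fieldType) (k N : nat) (G : 'M[F]_(k, N)) :=
  forall x : 'rV[F]_N, in_code G x -> in_dual G x -> x = 0.

(* Main.v *)
Require Import Defs.
From HB Require Import structures.
From mathcomp Require Import all_boot all_order all_algebra all_field.
From mathcomp Require Import ring zify.
Set Implicit Arguments. Unset Strict Implicit. Unset Printing Implicit Defensive.
Local Open Scope ring_scope.
Import GRing.Theory.

Section S.
Variable F : fieldType.
Hypothesis h2 : 2%N \in [pchar F].

Lemma mx_add2 m n (A : 'M[F]_(m, n)) : A + A = 0.
Proof. by apply/matrixP => i j; rewrite !mxE (addrr_pchar2 h2). Qed.

Lemma sq_comm (A B : 'M[F]_2) : A * B = B * A -> (A + B) ^+ 2 = A ^+ 2 + B ^+ 2.
Proof.
move=> AB; rewrite !expr2 mulrDl !mulrDr -AB.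
by rewrite -addrA (addrA (A * B)) mx_add2 add0r.
Qed.

Variable x : F.
Definition M2 : 'M[F]_2 :=
  \matrix_(i, j) if ((i : nat) == 0%N) && ((j : nat) == 0%N) then x
                 else if i == j then 0 else 1.

Lemma M2sq : M2 ^+ 2 = x *: M2 + 1.
Proof.
apply/matrixP => i j; rewrite expr2 !mxE !big_ord_recl big_ord0 !mxE.
case: i => [[|[|//]] Hi]; case: j => [[|[|//]] Hj] /=;
  rewrite ?mulr0 ?mulr1 ?mul0r ?mul1r ?addr0 ?add0r //.
Qed.

Lemma M2Q j : (M2 ^+ (2 ^ j)) ^+ 2 + x ^+ (2 ^ j) *: M2 ^+ (2 ^ j) + 1 = 0.
Proof.
elim: j => [|j IH].
  by rewrite expn0 !expr1 M2sq -addrA mx_add2.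
set P := M2 ^+ (2 ^ j) in IH *.
have -> : M2 ^+ (2 ^ j.+1) = P ^+ 2 by rewrite expnSr exprM.
have -> : x ^+ (2 ^ j.+1) = (x ^+ (2 ^ j)) ^+ 2 by rewrite expnSr exprM.
set c := x ^+ (2 ^ j) in IH *.
have : (P ^+ 2 + c *: P + 1) ^+ 2 = 0 by rewrite IH expr2 mulr0.
rewrite sq_comm; last by rewrite mulr1 mul1r.
rewrite sq_comm; last by rewrite -scalerAl -scalerAr -exprSr -exprS.
by rewrite expr1n exprZn -exprM -exprM mulnC.
Qed.

Lemma M2D j : exists a : F, M2 ^+ (2 ^ j) = a%:M + x ^+ (2 ^ j - 1) *: M2.
Proof.
elim: j => [|j [a IH]].
  by exists 0; rewrite expn0 expr1 subnn expr0 scale1r raddf0 add0r.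
exists (a ^+ 2 + (x ^+ (2 ^ j - 1)) ^+ 2).
rewrite expnSr exprM IH sq_comm; last exact: (esym (scalar_mxC _ _)).
rewrite exprZn M2sq scalerDr scalerA.
have -> : a%:M ^+ 2 = (a ^+ 2)%:M :> 'M[F]_2 by rewrite (expr2 a) scalar_mxM expr2.
rewrite -scalemx1 -[(1 : 'M[F]_2)]/(1%:M) scalemx1 raddfD /= addrCA addrA.
have E : ((2 ^ j - 1) * 2).+1 = (2 ^ j * 2 - 1)%N.
  have : (0 < 2 ^ j)%N by rewrite expn_gt0.
  case: (2 ^ j)%N => // t _; lia.
by rewrite scalemx1 -exprM -exprSr E -addrA addrC.
Qed.

Fixpoint wseq (k : nat) : F :=
  match k with
  | 0 => 1
  | k'.+1 => match k' with 0 => x | k''.+1 => x * wseq k' + wseq k'' end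
  end.

Lemma wseqSS k : wseq k.+2 = x * wseq k.+1 + wseq k.
Proof. by []. Qed.

Arguments wseq : simpl never.

Lemma M2pow k : M2 ^+ k.+2 = \matrix_(i, j) wseq (k.+2 - i - j).
Proof.
elim: k => [|k IH].
  rewrite M2sq; apply/matrixP => i j; rewrite !mxE.
  case: i => [[|[|//]] Hi]; case: j => [[|[|//]] Hj] /=;
    rewrite ?mulr0 ?mulr1 ?mul0r ?mul1r ?addr0 ?add0r //.
rewrite exprSr IH; apply/matrixP => i j; rewrite !mxE !big_ord_recl big_ord0 !mxE.
case: i => [[|[|//]] Hi]; case: j => [[|[|//]] Hj] /=;
  rewrite ?mulr0 ?mulr1 ?mul0r ?mul1r ?addr0 ?add0r ?subn0 ?subSS ?subn0 //;
  by rewrite wseqSS mulrC.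
Qed.

Lemma cassini k : wseq k.+2 * wseq k + wseq k.+1 ^+ 2 = 1.
Proof.
elim: k => [|k IH].
  by rewrite wseqSS /= mulr1 expr2 addrAC (addrr_pchar2 h2) add0r.
rewrite -{}IH wseqSS.
set a := wseq k; set b := wseq k.+1.
have hc : wseq k.+2 = x * b + a by [].
rewrite hc.
have -> : (x * (x * b + a) + b) * b + (x * b + a) ^+ 2 =
   (x * b + a) * a + b ^+ 2 + (x * b + a) * (x * b + x * b) by ring.
by rewrite (addrr_pchar2 h2) mulr0 addr0.
Qed.
End S.
Arguments wseq : simpl never.

Section T.
Variable F : finFieldType.
Hypothesis h2 : 2%N \in [pchar F].
Variable x : F.
Hypothesis hx : x != 0.

Lemma cardq : exists k, #|F| = (2 ^ k)%N.
Proof. exists (logn 2 #|F|). exact: (card_pprimeChar h2). Qed.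

Let N := x%:M + M2 x.

Lemma MN : M2 x * N = 1.
Proof.
rewrite /N mulrDr -[_ * _%:M]/(_ *m _) mul_mx_scalar.
have := M2sq x; rewrite expr2 => ->.
by rewrite addrA (mx_add2 h2) add0r.
Qed.

Lemma NM : N * M2 x = 1.
Proof.
rewrite /N mulrDl -[_%:M * _]/(_ *m _) mul_scalar_mx.
have := M2sq x; rewrite expr2 => ->.
by rewrite addrA (mx_add2 h2) add0r.
Qed.

Lemma M2card : M2 x ^+ (#|F| ^ 2 - 1) = 1.
Proof.
have [k Hk] := cardq.
have [a Ha] := M2D h2 x k.
have hQ := M2Q h2 x k.
rewrite -Hk in Ha hQ.
have xq : x ^+ #|F| = x by apply: expf_card.
have q0 : (0 < #|F|)%N by rewrite Hk expn_gt0.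
have x1 : x ^+ (#|F| - 1) = 1.
  apply: (mulIf hx); rewrite mul1r -exprSr subn1 prednK //.
rewrite x1 scale1r in Ha.
rewrite xq Ha in hQ.
have := congr1 (fun A : 'M[F]_2 => A ord0 ord0) hQ.
rewrite /= !mxE !big_ord_recl big_ord0 !mxE /= mulr1n mulr0n add0r mul1r addr0.
have -> : (a + x) * (a + x) + 1 + x * (a + x) + 1
   = a * (a + x) + (x * (a + x) + x * (a + x)) + (1 + 1) by ring.
rewrite !(addrr_pchar2 h2) !addr0 => /eqP; rewrite mulf_eq0 => /orP[] /eqP ha.
  rewrite ha raddf0 add0r in Ha.
  have e1 : M2 x ^+ (#|F| - 1) = 1.
    by rewrite -[LHS]mulr1 -MN mulrA -exprSr subn1 prednK // Ha.
  have -> : (#|F| ^ 2 - 1 = (#|F| - 1) * (#|F| + 1))%N by rewrite -subn_sqr exp1n.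
  by rewrite exprM e1 expr1n.
have ax : a = x by rewrite -(addrK x a) ha sub0r (oppr_pchar2 h2).
rewrite ax -/N in Ha.
have e1 : M2 x ^+ (#|F| + 1) = 1 by rewrite exprD Ha expr1 NM.
have -> : (#|F| ^ 2 - 1 = (#|F| + 1) * (#|F| - 1))%N by rewrite mulnC -subn_sqr exp1n.
by rewrite exprM e1 expr1n.
Qed.

Lemma wn_ne0 n r m : (2 <= n)%N -> n.+1 = (2 ^ r * m.+1)%N ->
  coprime m.+1 (#|F| ^ 2 - 1) -> wseq x n != 0.
Proof.
move=> hn hm hcop; apply/eqP => hw.
case: n hn hm hw => [|[|k]] //= _ hm hw.
have hd : wseq x k.+3 = wseq x k.+1 by rewrite wseqSS hw mulr0 add0r.
have := cassini h2 x k.+1; rewrite hw expr0n /= addr0 hd => hd2.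
have d1 : wseq x k.+1 = 1.
  have : (wseq x k.+1 + 1) * (wseq x k.+1 + 1) = 0.
    have -> : (wseq x k.+1 + 1) * (wseq x k.+1 + 1) =
      wseq x k.+1 * wseq x k.+1 + (wseq x k.+1 + wseq x k.+1) + 1 by ring.
    by rewrite hd2 (addrr_pchar2 h2) addr0 (addrr_pchar2 h2).
  move/eqP; rewrite mulf_eq0 orbb => /eqP h.
  by rewrite -(addrK 1 (wseq x k.+1)) h sub0r (oppr_pchar2 h2).
have Mn : M2 x ^+ k.+3 = 1.
  rewrite (M2pow x k.+1); apply/matrixP => i j; rewrite !mxE.
  case: i => [[|[|//]] Hi]; case: j => [[|[|//]] Hj] /=;
    rewrite ?subn0 ?subSS ?subn0 ?hd ?d1 ?hw //.
set Q := (#|F| ^ 2 - 1)%N in hcop.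
have [u _ hu] := Bezoutl Q (ltn0Sn k.+2).
set g := gcdn k.+3 Q in hu.
have Mg : M2 x ^+ g = 1.
  have [t ht] := dvdnP hu.
  have : M2 x ^+ (g + u * Q) = 1 by rewrite ht mulnC exprM Mn expr1n.
  by rewrite exprD mulnC exprM M2card expr1n mulr1.
have hg : (g %| 2 ^ r)%N.
  have cg : coprime g m.+1 by rewrite coprime_sym (coprime_dvdr (dvdn_gcdr _ _) hcop).
  by rewrite -(Gauss_dvdr _ cg) mulnC -hm dvdn_gcdl.
have [s _ gs] := dvdn_pfactor g r (isT : prime 2) hg.
have [a Ha] := M2D h2 x s.
rewrite -gs Mg in Ha.
have := congr1 (fun A : 'M[F]_2 => A ord0 (lift ord0 ord0)) Ha.
rewrite !mxE /= mulr1 add0r => /esym/eqP; rewrite expf_eq0 (negbTE hx) andbF.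
done.
Qed.
End T.


Section U.
Variable F : fieldType.
Hypothesis h2 : 2%N \in [pchar F].

Lemma sum_ind n' (w : 'cV[F]_n'.+1) k (b : F) :
  \sum_(j < n'.+1) (if (j : nat) == k then b else 0) * w j 0 =
  if (k < n'.+1)%N then b * w (inord k) 0 else 0.
Proof.
rewrite (eq_bigr (fun j : 'I_n'.+1 => if (j : nat) == k then b * w (inord j) 0 else 0)).
  by rewrite -big_mkcond (big_ord1_eq _ (fun j => b * w (inord j) 0)).
by move=> j _; rewrite inord_val; case: eqP; rewrite ?mul0r.
Qed.

Lemma solve (b c y z e : F) : b != 0 -> c * y + b * z + e = 0 -> z = (c / b) * y + e / b.
Proof.
move=> hb H.
have hz : b * z = c * y + e.
  have : b * z = - (c * y + e).
    by apply: (addrI (c * y + e)); rewrite addrN -H; ring.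
  by rewrite (oppr_pchar2 h2).
apply: (mulfI hb); rewrite hz; field; exact: hb.
Qed.

Lemma entryT n' (c b : F) (i : nat) (j : 'I_n'.+1) : (i < n'.+1)%N ->
  tridiagT n'.+1 c b (inord i) j =
  (if (j : nat) == i then c else 0) + (if (j : nat) == i.+1 then b else 0)
  + (if i is i'.+1 then (if (j : nat) == i' then b else 0) else 0).
Proof.
move=> hi; rewrite /tridiagT mxE.
case: j => j hj /=.
rewrite -[inord i == _]/((inord i : nat) == j) inordK //.
case: i hi => [|i'] hi; do ! case: eqP => //= ?; subst; rewrite ?addr0 ?add0r //; try lia.
Qed.

Lemma ker_tri n' (c b : F) (v : 'cV[F]_n'.+1) : b != 0 ->
  wseq (c / b) n'.+1 != 0 -> tridiagT n'.+1 c b *m v = 0 -> v = 0.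
Proof.
move=> hb hw hT.
pose g k := if (k < n'.+1)%N then v (inord k) 0 else 0.
have eq_i : forall i, (i < n'.+1)%N ->
    c * g i + b * g i.+1 + (if i is i'.+1 then b * g i' else 0) = 0.
  move=> i hi; have := congr1 (fun A : 'cV[F]_n'.+1 => A (inord i) 0) hT; rewrite !mxE => H; rewrite -[X in _ = X]H {H}.
  rewrite (eq_bigr (fun j : 'I_n'.+1 => (if (j : nat) == i then c else 0) * v j 0
      + (if (j : nat) == i.+1 then b else 0) * v j 0
      + (if i is i'.+1 then (if (j : nat) == i' then b else 0) else 0) * v j 0)).
    rewrite !big_split /= !sum_ind /g hi.
    case: i hi => [|i'] hi /=.
      rewrite big1 ?addr0; last by move=> j _; rewrite mul0r.
      by case: ifP; rewrite ?mulr0.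
    by rewrite sum_ind (ltnW hi); case: ifP; rewrite ?mulr0.
  by move=> j _; rewrite entryT // -!mulrDl.
set x := c / b.
have rec : forall k, (k.+1 <= n'.+1)%N -> g k = g 0%N * wseq x k /\ g k.+1 = g 0%N * wseq x k.+1.
  elim => [|k IH] hk.
    split; first by rewrite mulr1.
    have := eq_i 0%N isT => /(solve hb) ->.
    by rewrite mul0r addr0 mulrC.
  have [IH1 IH2] := IH (ltnW hk).
  split => //.
  have := solve hb (eq_i k.+1 hk) => ->.
  rewrite IH1 IH2 wseqSS /x; field; exact: hb.
have gn : g n'.+1 = 0 by rewrite /g ltnn.
have [_ H] := rec n' (leqnn _).
have g0 : g 0%N = 0.
  by move: H; rewrite gn => /esym/eqP; rewrite mulf_eq0 (negbTE hw) orbF => /eqP.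
apply/matrixP => i j; rewrite ord1 mxE.
have [H1 _] := rec i (ltn_ord i).
by move: H1; rewrite g0 mul0r /g ltn_ord inord_val.
Qed.
End U.

Lemma trT (F : fieldType) n (a b : F) : (tridiagT n a b)^T = tridiagT n a b.
Proof.
apply/matrixP => i j; rewrite !mxE eq_sym; case: eqP => // _.
by rewrite orbC.
Qed.

Theorem corollary2p7 (F : finFieldType) (h2 : 2%N \in [pchar F])
  (n r m : nat) (hn : (2 <= n)%N) (b : F) (hb : b != 0)
  (hr_div : (2 ^ r %| n.+1)%N) (hr_ndiv : ~~ (2 ^ r.+1 %| n.+1)%N)
  (hm : n.+1 = (2 ^ r * m.+1)%N)
  (hr1 : (1 <= r)%N)
  (hcop : coprime m.+1 (#|F| ^ 2 - 1)) :
  forall a : F, a != 1 -> is_LCD (genC n a b).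
Proof.
move=> a ha.
have hc : a + 1 != 0.
  apply: contra ha => /eqP h; apply/eqP.
  by rewrite -(addrK 1 a) h sub0r (oppr_pchar2 h2).
have hx : (a + 1) / b != 0 by rewrite mulf_neq0 ?invr_eq0.
have hw := wn_ne0 h2 hx hn hm hcop.
case: n hn hr_div hr_ndiv hm hw => [//|n'] hn _ _ hm hw.
have ker : forall w : 'cV[F]_n'.+1,
    (1%:M + tridiagT n'.+1 a b) *m w = 0 -> w = 0.
  move=> w; have -> : 1%:M + tridiagT n'.+1 a b = tridiagT n'.+1 (a + 1) b.
    apply/matrixP => i j; rewrite !mxE; case: eqP => _ /=.
      by rewrite addrC.
    by rewrite add0r.
  move=> hT; exact: (@ker_tri F h2 n' (a + 1) b w hb hw hT).
move=> y /submxP [u ->] Hd.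
have GxT : genC n'.+1 a b *m (u *m genC n'.+1 a b)^T = 0.
  apply/row_matrixP => i; rewrite row_mul row0; apply: Hd; exact: row_sub.
rewrite trmx_mul mulmxA /genC tr_row_mx mul_row_col trmx1 mulmx1 trT in GxT.
have E : (1%:M + tridiagT n'.+1 a b) *m (1%:M + tridiagT n'.+1 a b)
        = 1%:M + tridiagT n'.+1 a b *m tridiagT n'.+1 a b.
  rewrite mulmxDl !mulmxDr !mul1mx mulmx1 addrA -(addrA 1%:M) (mx_add2 h2) addr0.
  by [].
rewrite -E -mulmxA in GxT.
have /ker /ker hu := GxT.
by rewrite -(trmxK u) hu trmx0 !mul0mx.
Qed.
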